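(* Let $k,\ell>0$ be real numbers and define $q_n=t_n-k$ and $r_n=t_n+\ell$ for all $n\ge0$. For complex $s$ with $\Re(s)>1$ put $\lambda(s;k,\ell)=2^s-\bigl(2^s(k-\ell)+(k+\ell)\bigr)$. Then for each $s$ with $\Re(s)>1$: (1) if $\lambda(s;k,\ell)=0$, then $\displaystyle\sum_{n\ge1}\frac{q_{n-1}}{n^s}=\frac{1-2^s}{1+2^s}\sum_{n\ge1}\frac{r_n}{n^s}$; (2) if $\lambda(s;k,\ell)=2^s$, then $\displaystyle(2^s+1)\sum_{n\ge1}\frac{q_{n-1}}{n^s}+(2^s-1)\sum_{n\ge1}\frac{r_n}{n^s}=2^s\zeta(s)$; (3) if $\lambda(s;k,\ell)=2^s-2$, then $\displaystyle(2^s+1)\sum_{n\ge1}\frac{q_{n-1}}{n^s}+(2^s-1)\sum_{n\ge1}\frac{r_n}{n^s}=2^s\eta(s)$.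
   Context: For $n\ge 0$, let $t_n\in\{0,1\}$ denote the sum of the binary digits of $n$ reduced modulo $2$ (so $t_0=0$; this is the Thue–Morse sequence). $\zeta(s)=\sum_{n\ge1}n^{-s}$ is the Riemann zeta function and $\eta(s)=\sum_{n\ge1}(-1)^{n-1}n^{-s}$ is the Dirichlet eta (alternating zeta) function, both for $\Re(s)>1$. *)

(* Defs.v *)
From Stdlib Require Import Reals BinNat BinPos.
From Coquelicot Require Import Coquelicot.
Open Scope R_scope.

Fixpoint pos_digit_sum (p : positive) : nat :=
  match p with
  | xH => 1%nat
  | xO p' => pos_digit_sum p'
  | xI p' => S (pos_digit_sum p')
  end.

Definition binary_digit_sum (n : nat) : nat :=
  match N.of_nat n with
  | N0 => 0%nat
  | Npos p => pos_digit_sum p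
  end.

Definition thue_morse (n : nat) : R := INR (Nat.modulo (binary_digit_sum n) 2).

(* x^s = exp(s ln x) for real x > 0 and complex s. *)
Definition cpow (x : R) (s : C) : C :=
  (exp (Re s * ln x) * cos (Im s * ln x), exp (Re s * ln x) * sin (Im s * ln x)).

Definition CSeries (a : nat -> C) : C :=
  (Series (fun n => Re (a n)), Series (fun n => Im (a n))).

(* Dirichlet series sum_{n>=1} f(n) / n^s, where f is given on n >= 1. *)
Definition dirichlet (f : nat -> C) (s : C) : C :=
  CSeries (fun n => (f (S n) / cpow (INR (S n)) s)%C).

Definition zeta (s : C) : C := dirichlet (fun _ => RtoC 1) s.
Definition eta (s : C) : C := dirichlet (fun n => RtoC ((-1) ^ (n - 1))) s.

Definition lambda (s : C) (k l : R) : C :=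
  (cpow 2 s - (cpow 2 s * RtoC (k - l) + RtoC (k + l)))%C.

(* Main.v *)
Require Import Defs.
From Stdlib Require Import Reals BinNat Lia Lra.
From Coquelicot Require Import Coquelicot.
Open Scope C_scope.

Lemma sum_n_lin (f g : nat -> R) (al be : R) N :
  sum_n (fun n => al * f n + be * g n)%R N = (al * sum_n f N + be * sum_n g N)%R.
Proof.
  induction N.
  - rewrite !sum_O. reflexivity.
  - rewrite !sum_Sn, IHN. unfold plus; simpl. ring.
Qed.

Lemma lim_comb (u v : nat -> R) (a b al be : R) :
  is_lim_seq u a -> is_lim_seq v b ->
  is_lim_seq (fun N => al * u N + be * v N)%R (al * a + be * b)%R.
Proof.
  intros Hu Hv. apply is_lim_seq_plus'.
  - apply (is_lim_seq_mult' (fun _ => al) u al a); auto. apply is_lim_seq_const.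
  - apply (is_lim_seq_mult' (fun _ => be) v be b); auto. apply is_lim_seq_const.
Qed.

Definition CL (a : nat -> C) (L : C) :=
  is_lim_seq (fun N => sum_n (fun n => Re (a n)) N) (Re L) /\
  is_lim_seq (fun N => sum_n (fun n => Im (a n)) N) (Im L).

Lemma CL_CSeries a L : CL a L -> CSeries a = L.
Proof.
  intros [H1 H2]. unfold CSeries. destruct L as [x y].
  f_equal; apply is_series_unique; assumption.
Qed.

Lemma CL_ex a : ex_series (fun n => Re (a n)) -> ex_series (fun n => Im (a n)) ->
  CL a (CSeries a).
Proof.
  intros H1 H2. split; simpl; apply (Series_correct _ H1) || apply (Series_correct _ H2).
Qed.

Lemma CL_ext a b L : (forall n, a n = b n) -> CL a L -> CL b L.
Proof.
  intros E [H1 H2]. split.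
  - eapply is_lim_seq_ext; [|exact H1]. intros N. apply sum_n_ext. intros; rewrite E; auto.
  - eapply is_lim_seq_ext; [|exact H2]. intros N. apply sum_n_ext. intros; rewrite E; auto.
Qed.

Lemma CL_lin a b A B (x y : C) : CL a A -> CL b B ->
  CL (fun n => x * a n + y * b n) (x * A + y * B).
Proof.
  intros [Ha1 Ha2] [Hb1 Hb2].
  set (Sa := fun N => sum_n (fun n => Re (a n)) N).
  set (Ta := fun N => sum_n (fun n => Im (a n)) N).
  set (Sb := fun N => sum_n (fun n => Re (b n)) N).
  set (Tb := fun N => sum_n (fun n => Im (b n)) N).
  split.
  - apply is_lim_seq_ext with (u := fun N =>
      (1 * (Re x * Sa N + (- Im x) * Ta N) + 1 * (Re y * Sb N + (- Im y) * Tb N))%R).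
    { intros N. unfold Sa, Ta, Sb, Tb. rewrite <- !sum_n_lin.
      apply (@sum_n_ext R_AbelianMonoid). intros n. unfold Re, Im; simpl. ring. }
    replace (Re (x * A + y * B))
      with (1 * (Re x * Re A + (- Im x) * Im A) + 1 * (Re y * Re B + (- Im y) * Im B))%R
      by (unfold Re, Im; simpl; ring).
    apply lim_comb; apply lim_comb; auto.
  - apply is_lim_seq_ext with (u := fun N =>
      (1 * (Re x * Ta N + (Im x) * Sa N) + 1 * (Re y * Tb N + (Im y) * Sb N))%R).
    { intros N. unfold Sa, Ta, Sb, Tb. rewrite <- !sum_n_lin.
      apply (@sum_n_ext R_AbelianMonoid). intros n. unfold Re, Im; simpl. ring. }
    replace (Im (x * A + y * B))
      with (1 * (Re x * Im A + (Im x) * Re A) + 1 * (Re y * Im B + (Im y) * Re B))%R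
      by (unfold Re, Im; simpl; ring).
    apply lim_comb; apply lim_comb; auto.
Qed.

Definition csum (a : nat -> C) N : C :=
  (sum_n (fun n => Re (a n)) N, sum_n (fun n => Im (a n)) N).

Lemma csum_0 a : csum a 0 = a 0%nat.
Proof. unfold csum. rewrite !sum_O. destruct (a 0%nat); reflexivity. Qed.

Lemma csum_S a N : csum a (S N) = csum a N + a (S N).
Proof. unfold csum. rewrite !sum_Sn. destruct (a (S N)); reflexivity. Qed.

Lemma CL_sub2 a b c A B Cc (x : C) : CL a A -> CL b B -> CL c Cc ->
  (forall N, csum a (2 * N + 1) = csum b (2 * N + 1) + x * csum c N) ->
  A = B + x * Cc.
Proof.
  intros [Ha1 Ha2] [Hb1 Hb2] [Hc1 Hc2] E.
  assert (Hphi : filterlim (fun N => (2 * N + 1)%nat) eventually eventually).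
  { apply eventually_subseq. intros; lia. }
  pose proof (is_lim_seq_subseq _ _ _ Hphi Ha1) as A1.
  pose proof (is_lim_seq_subseq _ _ _ Hphi Ha2) as A2.
  pose proof (is_lim_seq_subseq _ _ _ Hphi Hb1) as B1.
  pose proof (is_lim_seq_subseq _ _ _ Hphi Hb2) as B2.
  apply injective_projections.
  - assert (L : is_lim_seq (fun N => sum_n (fun n => Re (b n)) (2 * N + 1)
          + (Re x * sum_n (fun n => Re (c n)) N + (- Im x) * sum_n (fun n => Im (c n)) N))%R
        (Re B + (Re x * Re Cc + (- Im x) * Im Cc))%R).
    { apply is_lim_seq_plus'; auto. apply lim_comb; auto. }
    apply is_lim_seq_ext with (v := fun N => sum_n (fun n => Re (a n)) (2 * N + 1)) in L.
    2:{ intros N. pose proof (f_equal fst (E N)) as F.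
        unfold csum, Cplus, Cmult in F; cbn [fst snd] in F.
        unfold Re, Im in *. rewrite F. ring. }
    pose proof (is_lim_seq_unique _ _ A1) as U1. pose proof (is_lim_seq_unique _ _ L) as U2.
    rewrite U1 in U2. injection U2. unfold Re, Im. intros ->. simpl. ring.
  - assert (L : is_lim_seq (fun N => sum_n (fun n => Im (b n)) (2 * N + 1)
          + (Re x * sum_n (fun n => Im (c n)) N + (Im x) * sum_n (fun n => Re (c n)) N))%R
        (Im B + (Re x * Im Cc + (Im x) * Re Cc))%R).
    { apply is_lim_seq_plus'; auto. apply lim_comb; auto. }
    apply is_lim_seq_ext with (v := fun N => sum_n (fun n => Im (a n)) (2 * N + 1)) in L.
    2:{ intros N. pose proof (f_equal snd (E N)) as F.
        unfold csum, Cplus, Cmult in F; cbn [fst snd] in F.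
        unfold Re, Im in *. rewrite F. ring. }
    pose proof (is_lim_seq_unique _ _ A2) as U1. pose proof (is_lim_seq_unique _ _ L) as U2.
    rewrite U1 in U2. injection U2. unfold Re, Im. intros ->. simpl. ring.
Qed.

Lemma cpow_add x s t : cpow x (s + t) = cpow x s * cpow x t.
Proof.
  unfold cpow. apply injective_projections; unfold Cmult, Cplus, Re, Im; cbn [fst snd];
  rewrite !Rmult_plus_distr_r, exp_plus, ?cos_plus, ?sin_plus; ring.
Qed.

Lemma cpow_0 x : cpow x 0 = 1.
Proof.
  unfold cpow. unfold Re, Im; cbn [fst snd]. rewrite !Rmult_0_l, exp_0, cos_0, sin_0.
  apply injective_projections; simpl; ring.
Qed.

Lemma cpow_inv x s : / cpow x s = cpow x (- s).
Proof.
  assert (H : cpow x s * cpow x (- s) = 1).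
  { rewrite <- cpow_add. replace (s + - s) with (RtoC 0) by ring. apply cpow_0. }
  assert (Hz : cpow x s <> 0).
  { intros Hz. rewrite Hz, Cmult_0_l in H. apply (f_equal fst) in H. simpl in H. lra. }
  rewrite <- (Cmult_1_r (/ cpow x s)), <- H, Cmult_assoc, Cinv_l, Cmult_1_l; auto.
Qed.

Lemma cpow_mul x y s : (0 < x)%R -> (0 < y)%R -> cpow (x * y) s = cpow x s * cpow y s.
Proof.
  intros Hx Hy. unfold cpow. rewrite ln_mult by auto.
  apply injective_projections; unfold Cmult; cbn [fst snd];
  rewrite !Rmult_plus_distr_l, exp_plus, ?cos_plus, ?sin_plus; ring.
Qed.

Lemma cpow_Re_bound x s : (Rabs (Re (cpow x s)) <= exp (Re s * ln x))%R.
Proof.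
  unfold cpow, Re at 1; cbn [fst]. rewrite Rabs_mult, (Rabs_pos_eq (exp _)) by (left; apply exp_pos).
  pose proof (exp_pos (Re s * ln x)). pose proof (COS_bound (Im s * ln x)).
  assert (Rabs (cos (Im s * ln x)) <= 1)%R by (apply Rabs_le; lra). nra.
Qed.

Lemma cpow_Im_bound x s : (Rabs (Im (cpow x s)) <= exp (Re s * ln x))%R.
Proof.
  unfold cpow, Im at 1; cbn [snd]. rewrite Rabs_mult, (Rabs_pos_eq (exp _)) by (left; apply exp_pos).
  pose proof (exp_pos (Re s * ln x)). pose proof (SIN_bound (Im s * ln x)).
  assert (Rabs (sin (Im s * ln x)) <= 1)%R by (apply Rabs_le; lra). nra.
Qed.

Lemma INR_double m : INR (S (2 * m + 1)) = (2 * INR (S m))%R.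
Proof. rewrite !S_INR, plus_INR, mult_INR. simpl. ring. Qed.

Lemma INR_double' m : INR (S (2 * m)) = (2 * INR m + 1)%R.
Proof. rewrite !S_INR, mult_INR. simpl. ring. Qed.

Lemma ln2_pos : (0 < ln 2)%R.
Proof. pose proof ln_lt_2. lra. Qed.

Section PS.
Variable sg : R.
Hypothesis Hsg : (1 < sg)%R.
Let w n := exp (- sg * ln (INR (S n))).
Let a := exp (- sg * ln 2).

Lemma w_pos n : (0 <= w n)%R.
Proof. left. apply exp_pos. Qed.

Lemma w_odd m : w (2 * m + 1)%nat = (a * w m)%R.
Proof.
  unfold w, a. rewrite INR_double, ln_mult by (try lra; apply lt_0_INR; lia).
  rewrite Rmult_plus_distr_l, exp_plus. ring.
Qed.

Lemma w_even m : (w (S (2 * m + 1)) <= w (2 * m + 1)%nat)%R.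
Proof.
  unfold w. left. apply exp_increasing.
  assert (ln (INR (S (2 * m + 1))) < ln (INR (S (S (2 * m + 1)))))%R.
  { apply ln_increasing. apply lt_0_INR; lia. apply lt_INR; lia. }
  nra.
Qed.

Lemma a_small : (2 * a < 1)%R.
Proof.
  unfold a. pose proof ln2_pos.
  assert (exp (- sg * ln 2) < exp (- ln 2))%R by (apply exp_increasing; nra).
  rewrite exp_Ropp, exp_ln in H0 by lra. lra.
Qed.

Lemma w_0 : w 0%nat = 1%R.
Proof. unfold w. simpl. rewrite ln_1, Rmult_0_r, exp_0. reflexivity. Qed.

Lemma sum_w_step N : (sum_n w (2 * N) <= 1 + 2 * a * (sum_n w N - w N))%R.
Proof.
  induction N.
  - simpl. rewrite sum_O, w_0. lra.
  - replace (2 * S N)%nat with (S (S (2 * N))) by lia.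
    rewrite !sum_Sn. unfold plus; simpl.
    replace (N + (N + 0))%nat with (2 * N)%nat by lia.
    replace (S (2 * N)) with (2 * N + 1)%nat by lia.
    pose proof (w_odd N). pose proof (w_even N). lra.
Qed.

Lemma sum_w_mono N d : (sum_n w N <= sum_n w (N + d))%R.
Proof.
  induction d.
  - rewrite Nat.add_0_r. lra.
  - rewrite Nat.add_succ_r, sum_Sn. unfold plus; simpl. pose proof (w_pos (S (N + d))). lra.
Qed.

Lemma sum_w_bound N : (sum_n w N <= / (1 - 2 * a))%R.
Proof.
  pose proof (sum_w_step N). pose proof (sum_w_mono N N).
  replace (N + N)%nat with (2 * N)%nat in H0 by lia.
  pose proof a_small. pose proof (w_pos N).
  assert (0 <= a)%R by (left; apply exp_pos).
  apply Rmult_le_reg_r with (1 - 2 * a)%R. lra.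
  rewrite Rinv_l by lra. nra.
Qed.

Lemma pseries : ex_series w.
Proof.
  destruct (growing_cv (sum_n w)) as [l Hl].
  - intros n. rewrite sum_Sn. unfold plus; simpl. pose proof (w_pos (S n)). lra.
  - exists (/ (1 - 2 * a))%R. intros x [i ->]. apply sum_w_bound.
  - exists l. apply is_lim_seq_Reals in Hl. exact Hl.
Qed.
End PS.

Lemma ex_coef (c : nat -> R) (M : R) (s : C) : (1 < Re s)%R ->
  (forall n, Rabs (c n) <= M)%R ->
  CL (fun n => RtoC (c n) * cpow (INR (S n)) (- s))
     (CSeries (fun n => RtoC (c n) * cpow (INR (S n)) (- s))).
Proof.
  intros Hs Hc. pose proof (pseries (Re s) Hs) as P.
  assert (Hb : forall n, (Rabs (Re (cpow (INR (S n)) (- s))) <= exp (- Re s * ln (INR (S n))))%R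
            /\ (Rabs (Im (cpow (INR (S n)) (- s))) <= exp (- Re s * ln (INR (S n))))%R).
  { intros n. replace (- Re s)%R with (Re (- s)) by reflexivity.
    split; [apply cpow_Re_bound | apply cpow_Im_bound]. }
  assert (HM : forall n, (0 <= M)%R) by (intros n; pose proof (Hc n); pose proof (Rabs_pos (c n)); lra).
  apply CL_ex.
  - apply (@ex_series_le R_AbsRing R_CompleteNormedModule _ (fun n => M * exp (- Re s * ln (INR (S n))))%R).
    + intros n. change (norm (Re (RtoC (c n) * cpow (INR (S n)) (- s)))) with
        (Rabs (Re (RtoC (c n) * cpow (INR (S n)) (- s)))).
      unfold RtoC, Cmult, Re at 1; cbn [fst snd]. rewrite Rmult_0_l, Rminus_0_r, Rabs_mult.
      destruct (Hb n). pose proof (Hc n). apply Rmult_le_compat; auto using Rabs_pos.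
    + apply (ex_series_scal_l M) in P. exact P.
  - apply (@ex_series_le R_AbsRing R_CompleteNormedModule _ (fun n => M * exp (- Re s * ln (INR (S n))))%R).
    + intros n. change (norm (Im (RtoC (c n) * cpow (INR (S n)) (- s)))) with
        (Rabs (Im (RtoC (c n) * cpow (INR (S n)) (- s)))).
      unfold RtoC, Cmult, Im at 1; cbn [fst snd]. rewrite Rmult_0_l, Rplus_0_r, Rabs_mult.
      destruct (Hb n). pose proof (Hc n). apply Rmult_le_compat; auto using Rabs_pos.
    + apply (ex_series_scal_l M) in P. exact P.
Qed.

Lemma bds_even n : binary_digit_sum (2 * n) = binary_digit_sum n.
Proof.
  unfold binary_digit_sum. rewrite Nnat.Nat2N.inj_mul. destruct (N.of_nat n); reflexivity.
Qed.

Lemma bds_odd n : binary_digit_sum (2 * n + 1) = S (binary_digit_sum n).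
Proof.
  unfold binary_digit_sum. rewrite Nnat.Nat2N.inj_add, Nnat.Nat2N.inj_mul.
  destruct (N.of_nat n); reflexivity.
Qed.

Lemma mod2_S d : (S d mod 2 = 1 - d mod 2)%nat.
Proof.
  induction d. reflexivity.
  replace (S (S d)) with (d + 1*2)%nat by lia. rewrite Nat.Div0.mod_add.
  pose proof (Nat.mod_upper_bound d 2 ltac:(lia)). lia.
Qed.

Lemma tm_even n : thue_morse (2 * n) = thue_morse n.
Proof. unfold thue_morse. rewrite bds_even. reflexivity. Qed.

Lemma tm_odd n : thue_morse (2 * n + 1) = (1 - thue_morse n)%R.
Proof.
  unfold thue_morse. rewrite bds_odd, mod2_S.
  pose proof (Nat.mod_upper_bound (binary_digit_sum n) 2 ltac:(lia)).
  rewrite minus_INR by lia. reflexivity.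
Qed.

Lemma tm_bound n : (Rabs (thue_morse n) <= 1)%R.
Proof.
  unfold thue_morse.
  pose proof (Nat.mod_upper_bound (binary_digit_sum n) 2 ltac:(lia)).
  rewrite Rabs_pos_eq by apply pos_INR.
  replace 1%R with (INR 1) by reflexivity. apply le_INR. lia.
Qed.

Section Main.
Variable s : C.
Hypothesis hs : (1 < Re s)%R.

Definition u n := cpow (INR (S n)) (- s).
Definition xx := cpow 2 (- s).
Definition T1 n := RtoC (thue_morse n) * u n.
Definition T2 n := RtoC (thue_morse (S n)) * u n.
Definition ee n := RtoC ((-1) ^ (S n - 1)) * u n.

Lemma u_odd m : u (2 * m + 1) = xx * u m.
Proof.
  unfold u, xx. rewrite INR_double, cpow_mul; auto. lra. apply lt_0_INR; lia.
Qed.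

Lemma a_even m : T1 (2 * m) + T2 (2 * m) = u (2 * m).
Proof.
  unfold T1, T2. replace (S (2 * m)) with (2 * m + 1)%nat by lia.
  rewrite tm_even, tm_odd, RtoC_minus. ring.
Qed.

Lemma a_odd m : T1 (2 * m + 1) + T2 (2 * m + 1) = u (2 * m + 1) + xx * (T2 m - T1 m).
Proof.
  unfold T1, T2. replace (S (2 * m + 1)) with (2 * S m)%nat by lia.
  rewrite tm_even, tm_odd, RtoC_minus, u_odd. ring.
Qed.

Lemma key_finite N : csum (fun n => T1 n + T2 n) (2 * N + 1)
  = csum u (2 * N + 1) + xx * csum (fun n => T2 n - T1 n) N.
Proof.
  induction N.
  - replace (2 * 0 + 1)%nat with 1%nat by lia. rewrite !csum_S, !csum_0.
    pose proof (a_even 0) as H0. pose proof (a_odd 0) as H1.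
    replace (2 * 0)%nat with 0%nat in * by lia. replace (0 + 1)%nat with 1%nat in * by lia.
    rewrite H0, H1. ring.
  - replace (2 * S N + 1)%nat with (S (S (2 * N + 1))) by lia.
    rewrite !csum_S, IHN.
    replace (S (S (2 * N + 1))) with (2 * S N + 1)%nat by lia.
    replace (S (2 * N + 1)) with (2 * S N)%nat by lia.
    rewrite a_even, a_odd. ring.
Qed.

Lemma e_even m : ee (2 * m) = u (2 * m).
Proof.
  unfold ee. replace (S (2 * m) - 1)%nat with (2 * m)%nat by lia.
  rewrite pow_1_even. ring.
Qed.

Lemma e_odd m : ee (2 * m + 1) = u (2 * m + 1) + (- (2) * xx) * u m.
Proof.
  unfold ee. replace (S (2 * m + 1) - 1)%nat with (S (2 * m))%nat by lia.
  rewrite pow_1_odd, u_odd.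
  replace (RtoC (-1)) with (- RtoC 1) by (apply injective_projections; simpl; lra). ring.
Qed.

Lemma eta_finite N : csum ee (2 * N + 1) = csum u (2 * N + 1) + (- (2) * xx) * csum u N.
Proof.
  induction N.
  - replace (2 * 0 + 1)%nat with 1%nat by lia. rewrite !csum_S, !csum_0.
    pose proof (e_even 0) as H0. pose proof (e_odd 0) as H1.
    replace (2 * 0)%nat with 0%nat in * by lia. replace (0 + 1)%nat with 1%nat in * by lia.
    rewrite H0, H1. ring.
  - replace (2 * S N + 1)%nat with (S (S (2 * N + 1))) by lia.
    rewrite !csum_S, IHN.
    replace (S (S (2 * N + 1))) with (2 * S N + 1)%nat by lia.
    replace (S (2 * N + 1)) with (2 * S N)%nat by lia.
    rewrite e_even, e_odd. ring.
Qed.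

Definition AA := CSeries (fun n => RtoC (thue_morse n) * cpow (INR (S n)) (- s)).
Definition BB := CSeries (fun n => RtoC (thue_morse (S n)) * cpow (INR (S n)) (- s)).
Definition ZZ := CSeries (fun n => RtoC 1 * cpow (INR (S n)) (- s)).
Definition EE := CSeries (fun n => RtoC ((-1) ^ (S n - 1)) * cpow (INR (S n)) (- s)).

Lemma CL_A : CL T1 AA.
Proof. apply (ex_coef _ 1); auto. intros; apply tm_bound. Qed.
Lemma CL_B : CL T2 BB.
Proof. apply (ex_coef (fun n => thue_morse (S n)) 1); auto. intros; apply tm_bound. Qed.
Lemma CL_Z : CL u ZZ.
Proof.
  eapply CL_ext; [|apply (ex_coef (fun _ => 1%R) 1); auto].
  - intros n. cbv beta. unfold u. ring.
  - intros; rewrite Rabs_R1; lra.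
Qed.
Lemma CL_E : CL ee EE.
Proof.
  apply (ex_coef (fun n => (-1) ^ (S n - 1))%R 1); auto. intros; rewrite pow_1_abs; lra.
Qed.

Lemma key : AA + BB = ZZ + xx * (BB - AA).
Proof.
  assert (H := CL_sub2 (fun n => T1 n + T2 n) u (fun n => T2 n - T1 n)
     (1 * AA + 1 * BB) ZZ ((-1) * AA + 1 * BB) xx).
  replace (AA + BB) with (1 * AA + 1 * BB) by ring. rewrite H.
  - ring.
  - eapply CL_ext; [|apply (CL_lin _ _ _ _ 1 1 CL_A CL_B)]. intros n; cbv beta; ring.
  - apply CL_Z.
  - eapply CL_ext; [|apply (CL_lin _ _ _ _ (-1) 1 CL_A CL_B)]. intros n; cbv beta; ring.
  - apply key_finite.
Qed.

Lemma eta_key : EE = ZZ + (- (2) * xx) * ZZ.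
Proof.
  apply (CL_sub2 ee u u); [apply CL_E | apply CL_Z | apply CL_Z | apply eta_finite].
Qed.

End Main.

Lemma two_s_nz (s : C) : (1 < Re s)%R -> 1 + cpow 2 s <> 0.
Proof.
  intros hs H. pose proof (f_equal fst H) as H1. pose proof (f_equal snd H) as H2.
  unfold cpow in H1, H2. simpl in H1, H2.
  set (E := exp (Re s * ln 2)) in *. set (th := (Im s * ln 2)%R) in *.
  assert (HE : (2 < E)%R).
  { unfold E. pose proof ln2_pos. rewrite <- (exp_ln 2) at 1 by lra.
    apply exp_increasing. nra. }
  pose proof (sin2_cos2 th) as Hsc. unfold Rsqr in Hsc.
  assert (Hc : (E * cos th = -1)%R) by lra.
  assert (Hs : (E * sin th = 0)%R) by lra.
  assert (E * E = 1)%R.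
  { transitivity (E * E * (sin th * sin th + cos th * cos th))%R. rewrite Hsc; ring.
    transitivity ((E * sin th) * (E * sin th) + (E * cos th) * (E * cos th))%R. ring.
    rewrite Hc, Hs. ring. }
  nra.
Qed.

Theorem theorem4 (k l : R) (hk : (0 < k)%R) (hl : (0 < l)%R) (s : C) (hs : (1 < Re s)%R) :
  let q := fun n : nat => RtoC (thue_morse n - k)%R in
  let r := fun n : nat => RtoC (thue_morse n + l)%R in
  let Q := dirichlet (fun n => q (n - 1)%nat) s in
  let Rs := dirichlet r s in
  let two_s := cpow 2 s in
  (lambda s k l = 0 -> Q = (1 - two_s) / (1 + two_s) * Rs) /\
  (lambda s k l = two_s -> (two_s + 1) * Q + (two_s - 1) * Rs = two_s * zeta s) /\
  (lambda s k l = two_s - 2 -> (two_s + 1) * Q + (two_s - 1) * Rs = two_s * eta s).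
Proof.
  intros q r Q Rs two_s.
  assert (HP : two_s * xx s = 1).
  { unfold two_s, xx. rewrite <- cpow_add. replace (s + - s) with (RtoC 0) by ring. apply cpow_0. }
  assert (HQ : Q = 1 * AA s + RtoC (- k) * ZZ s).
  { unfold Q, q, dirichlet. apply CL_CSeries.
    eapply CL_ext; [| apply (CL_lin _ _ _ _ 1 (RtoC (-k)) (CL_A s hs) (CL_Z s hs))].
    intros n; cbv beta. unfold T1, u, Cdiv. rewrite cpow_inv.
    replace (S n - 1)%nat with n by lia. rewrite RtoC_minus, RtoC_opp. ring. }
  assert (HR : Rs = 1 * BB s + RtoC l * ZZ s).
  { unfold Rs, r, dirichlet. apply CL_CSeries.
    eapply CL_ext; [| apply (CL_lin _ _ _ _ 1 (RtoC l) (CL_B s hs) (CL_Z s hs))].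
    intros n; cbv beta. unfold T2, u, Cdiv. rewrite cpow_inv, RtoC_plus. ring. }
  assert (HZ : zeta s = ZZ s).
  { unfold zeta, dirichlet. apply CL_CSeries.
    eapply CL_ext; [| apply (CL_Z s hs)].
    intros n; cbv beta. unfold u, Cdiv. rewrite cpow_inv. ring. }
  assert (HE : eta s = EE s).
  { unfold eta, dirichlet. apply CL_CSeries.
    eapply CL_ext; [| apply (CL_E s hs)].
    intros n; cbv beta. unfold ee, u, Cdiv. rewrite cpow_inv. reflexivity. }
  assert (Hmain : (two_s + 1) * Q + (two_s - 1) * Rs = lambda s k l * ZZ s).
  { rewrite HQ, HR. unfold lambda. change (cpow 2 s) with two_s.
    rewrite RtoC_minus, RtoC_plus, RtoC_opp.
    transitivity (two_s * (AA s + BB s) - (BB s - AA s)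
      - RtoC k * (two_s + 1) * ZZ s + RtoC l * (two_s - 1) * ZZ s). ring.
    rewrite (key s hs).
    transitivity (two_s * ZZ s + (two_s * xx s) * (BB s - AA s) - (BB s - AA s)
      - RtoC k * (two_s + 1) * ZZ s + RtoC l * (two_s - 1) * ZZ s). ring.
    rewrite HP. ring. }
  assert (Hnz : 1 + two_s <> 0) by (apply two_s_nz; auto).
  split; [|split]; intros Hl.
  - rewrite Hl in Hmain.
    assert (H1 : (1 + two_s) * Q = (1 - two_s) * Rs).
    { transitivity ((two_s + 1) * Q + (two_s - 1) * Rs - (two_s - 1) * Rs). ring.
      rewrite Hmain. ring. }
    transitivity ((1 + two_s) * Q / (1 + two_s)). field. auto.
    rewrite H1. field. auto.
  - rewrite Hmain, Hl, HZ. reflexivity.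
  - rewrite Hmain, Hl, HE, (eta_key s hs).
    transitivity (two_s * ZZ s - 2 * ZZ s - 2 * ZZ s * 0). ring.
    transitivity (two_s * ZZ s - 2 * ZZ s * (two_s * xx s)).
    rewrite HP. ring. ring.
Qed.
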